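(* Let $K\ge 2$ and let $r\in[0,1]^K$ satisfy $r(1)>r(2)>\cdots>r(K)$. Fix a sub-optimal arm $j\in\{2,\ldots,K\}$. For a policy $\pi=\pi_\theta$ write $\varepsilon:=1-\pi(j)$ and $p_a:=\pi(a)$. There exists $\varepsilon_0>0$, depending on the reward gaps and $K$, such that for all $\varepsilon\in(0,\varepsilon_0)$: if $p_1\ge \varepsilon/K$, then under the enlightened gradient (EG) flow \[ \dot\theta(1)-\dot\theta(j)\;\ge\;\frac{\Delta_{1j}}{4K}\,\varepsilon . \]
   Context: $K$-armed bandit: the policy is parameterized by logits $\theta\in\mathbb{R}^K$ via the softmax $\pi_\theta(a)=e^{\theta(a)}/\sum_{a'}e^{\theta(a')}$. The advantage is $U(a):=r(a)-\pi_\theta^\top r$, and $\Delta_{ab}:=r(a)-r(b)$. A gated policy-gradient flow with weights $w(a)\ge 0$ is $\dot\theta(a)=\sum_{a'=1}^K w(a')\,\pi(a')\,U(a')\,(\mathbf{1}\{a=a'\}-\pi(a))$. The enlightened gradient (EG) flow is the case $w(a)=\mathbf{1}\{U(a)>0\}$. *)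

(* Defs.v *)
From HB Require Import structures.
From mathcomp Require Import all_boot all_order all_algebra.
From mathcomp Require Import all_classical all_reals all_analysis.
Set Implicit Arguments. Unset Strict Implicit. Unset Printing Implicit Defensive.
Import Order.TTheory GRing.Theory Num.Theory.
Local Open Scope ring_scope.

(* Arms are indexed by 'I_K (arm a of the paper is index a-1). *)

Definition softmax {R : realType} {K : nat} (theta : 'I_K -> R) (a : 'I_K) : R :=
  expR (theta a) / \sum_(b < K) expR (theta b).

Definition adv {R : realType} {K : nat} (r theta : 'I_K -> R) (a : 'I_K) : R :=
  r a - \sum_(b < K) softmax theta b * r b.

Definition gated_flow {R : realType} {K : nat} (w r theta : 'I_K -> R) (a : 'I_K) : R :=
  \sum_(a' < K) w a' * softmax theta a' * adv r theta a'
                 * ((a == a')%:R - softmax theta a).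

Definition EG_weights {R : realType} {K : nat} (r theta : 'I_K -> R) (a : 'I_K) : R :=
  if 0 < adv r theta a then 1 else 0.

Definition EG_flow {R : realType} {K : nat} (r theta : 'I_K -> R) (a : 'I_K) : R :=
  gated_flow (EG_weights r theta) r theta a.

(* Main.v *)
Require Import Defs.
From HB Require Import structures.
From mathcomp Require Import all_boot all_order all_algebra.
From mathcomp Require Import all_classical all_reals all_analysis.
From mathcomp Require Import ring lra.
Import Order.TTheory GRing.Theory Num.Theory.
Local Open Scope ring_scope.

Section H.
Variables (R : realType) (K : nat).
Implicit Types (theta r : 'I_K -> R).

Lemma softmax_ge0 theta a : 0 <= softmax theta a.
Proof.
rewrite /softmax divr_ge0 ?expR_ge0 //.
by apply: sumr_ge0 => i _; rewrite expR_ge0.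
Qed.

Lemma softmax_sum theta (a : 'I_K) : \sum_(b < K) softmax theta b = 1.
Proof.
have hpos : 0 < \sum_(b < K) expR (theta b).
  rewrite (bigD1 a) //=; apply: ltr_pwDl; first exact: expR_gt0.
  by apply: sumr_ge0 => i _; rewrite expR_ge0.
rewrite /softmax -mulr_suml divff //; exact: lt0r_neq0.
Qed.

Lemma gated_flowE w r theta a :
  gated_flow w r theta a =
  w a * softmax theta a * adv r theta a
  - softmax theta a * \sum_(b < K) w b * softmax theta b * adv r theta b.
Proof.
rewrite /gated_flow.
under eq_bigr => i _ do rewrite mulrBr.
rewrite sumrB mulr_sumr; congr (_ - _); last first.
  by apply: eq_bigr => i _; rewrite mulrC.
rewrite (bigD1 a) //= eqxx mulr1 big1 ?addr0 // => i /negbTE.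
by rewrite eq_sym => ->; rewrite mulr0.
Qed.

End H.
Lemma advE (R : realType) K (r theta : 'I_K -> R) (a0 a : 'I_K) :
  adv r theta a = \sum_(b < K) softmax theta b * (r a - r b).
Proof.
rewrite /adv; symmetry.
under eq_bigr => b _ do rewrite mulrBr.
rewrite sumrB -mulr_suml softmax_sum // mul1r.
by [].
Qed.

Lemma c_ge0 (R : realType) K (r theta : 'I_K -> R) b :
  0 <= EG_weights r theta b * softmax theta b * adv r theta b.
Proof.
rewrite /EG_weights; case: ifP => h; last by rewrite !mul0r.
by rewrite mul1r mulr_ge0 ?softmax_ge0 // ltW.
Qed.

Theorem theorem1 (R : realType) (K : nat) (hK : (2 <= K)%N)
  (r : 'I_K -> R)
  (hr01 : forall a, 0 <= r a <= 1)
  (hdec : forall a b : 'I_K, (a < b)%N -> r b < r a)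
  (a1 : 'I_K) (ha1 : nat_of_ord a1 = 0%N)
  (j : 'I_K) (hj : (0 < nat_of_ord j)%N) :
  exists eps0 : R, 0 < eps0 /\
    forall theta : 'I_K -> R,
      let eps := 1 - softmax theta j in
      0 < eps -> eps < eps0 ->
      eps / K%:R <= softmax theta a1 ->
      (r a1 - r j) / (4 * K%:R) * eps <= EG_flow r theta a1 - EG_flow r theta j.
Proof.
have hD : 0 < r a1 - r j by rewrite subr_gt0; apply: hdec; rewrite ha1.
have hKp : 0 < K%:R :> R by rewrite ltr0n; case: K hK {r hr01 hdec a1 ha1 j hj hD}.
have hja : j != a1 by apply/eqP => e; move: hj; rewrite e ha1.
set Dl := r a1 - r j.
exists (Num.min (1/4) (Dl / (4 * K%:R))); split.
  by rewrite lt_min; apply/andP; split; [lra| apply: divr_gt0 => //; lra].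
move=> theta; cbv zeta; set eps : R := 1 - softmax theta j.
move=> he; rewrite lt_min => /andP [he1 he2] hp1.
set p := softmax theta.
set c := fun b => EG_weights r theta b * p b * adv r theta b.
have hc : forall b, 0 <= c b by move=> b; exact: c_ge0.
set S := \sum_(b < K) c b.
have hflow : forall a, EG_flow r theta a = c a - p a * S.
  by move=> a; rewrite /EG_flow gated_flowE.
rewrite !hflow.
have psum := @softmax_sum _ _ theta a1.
have hp1j : p a1 + p j <= 1.
  rewrite -psum (bigD1 a1) //= (bigD1 j) //= addrA lerDl.
  by apply: sumr_ge0 => i _; exact: softmax_ge0.
have hS : c a1 + c j <= S.
  rewrite /S (bigD1 a1) //= (bigD1 j) //= addrA lerDl.
  by apply: sumr_ge0 => i _; exact: hc.
have hpj : p j = 1 - eps by rewrite /eps /p; lra.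
have hU1 : p j * Dl <= adv r theta a1.
  rewrite (@advE _ _ _ _ a1) (bigD1 j) //= lerDl.
  apply: sumr_ge0 => i _; rewrite mulr_ge0 ?softmax_ge0 // subr_ge0.
  case: (eqVneq i a1) => [->//|hi]; apply: ltW; apply: hdec; rewrite ha1.
  by rewrite lt0n; apply/eqP => h; move/eqP: hi; apply; apply/val_inj; rewrite /= h ha1.
have hp1ge : 0 <= p a1 := @softmax_ge0 _ _ _ _.
have hpjge : 0 <= p j := @softmax_ge0 _ _ _ _.
have hc1 : c a1 = p a1 * adv r theta a1.
  rewrite /c /EG_weights ifT ?mul1r //.
  apply: lt_le_trans hU1; rewrite mulr_gt0 //; lra.
set x := EG_weights r theta j * adv r theta j.
have hcj : c j = p j * x by rewrite /c /x; ring.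
have hx : 0 <= x <= eps.
  rewrite /x /EG_weights; case: ifP => h; last by rewrite mul0r lexx; lra.
  rewrite mul1r ltW //= (@advE _ _ _ _ a1) (bigD1 j) //= subrr mulr0 add0r.
  have -> : eps = \sum_(i < K | i != j) p i.
    by rewrite /eps -psum (bigD1 j) //=; lra.
  apply: ler_sum => i _; rewrite ler_piMr ?softmax_ge0 //.
  by have := hr01 i; have := hr01 j; lra.
rewrite hc1 hcj.
rewrite hc1 hcj in hS.
set U := adv r theta a1 in hU1 hc1 hS *.
set q := p a1 in hp1j hS hp1ge hc1 *.
have hq : q <= eps by lra.
have hq2 : eps / K%:R <= q by [].
set t := Dl / K%:R in hq2.
have ht : Dl / (4 * K%:R) = t / 4.
  rewrite /t; field; rewrite ?lt0r_neq0 // ?andbT; lra.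
rewrite ht in he2 *.
have ht0 : 0 < t by rewrite /t divr_gt0.
have hU0 : 0 <= U by apply: le_trans _ hU1; apply: mulr_ge0 => //; exact: ltW.
have h1 : (p j - q) * (q * U + p j * x) <= (p j - q) * S.
  by rewrite ler_wpM2l //; lra.
have h2 : eps * (1 - eps) * t <= q * U.
  have -> : eps * (1 - eps) * t = (eps / K%:R) * (p j * Dl).
    by rewrite hpj /t; field; apply: lt0r_neq0.
  exact: ler_pM (divr_ge0 (ltW he) (ltW hKp)) (mulr_ge0 hpjge (ltW hD)) hq2 hU1.
have h3 : p j * x <= eps by case/andP: hx => ? ?; nra.
have h4 : 0 <= p j * x by case/andP: hx => ? ?; nra.
have hqU : 0 <= q * U by rewrite mulr_ge0.
have hpq : 0 <= p j - q by lra.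
have h5 : q * U * (1 + p j - q) >= q * U.
  have := mulr_ge0 hqU hpq; lra.
have h6 : p j * x * (1 - p j + q) <= 2 * eps * eps.
  have hb : 0 <= 1 - p j + q <= 2 * eps by lra.
  case/andP: hb => hb1 hb2.
  have := ler_pM h4 hb1 h3 hb2; lra.
have h7 : eps * (1 - eps) * t - 2 * eps * eps >= t / 4 * eps.
  have hh : t / 4 <= (1 - eps) * t - 2 * eps.
    have := ler_pM (ltW he) (ltW ht0) (ltW he1) (lexx t); lra.
  have := ler_wpM2l (ltW he) hh; lra.
have e1 : q * U - p j * x + (p j - q) * (q * U + p j * x)
  = q * U * (1 + p j - q) - p j * x * (1 - p j + q) by ring.
have g1 : q * U - p j * x + (p j - q) * (q * U + p j * x) <= q * U - q * S - (p j * x - p j * S).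
  have -> : q * U - q * S - (p j * x - p j * S) = q * U - p j * x + (p j - q) * S by ring.
  by rewrite lerD2l.
have g2 : t / 4 * eps <= q * U * (1 + p j - q) - p j * x * (1 - p j + q).
  apply: le_trans h7 _.
  have : eps * (1 - eps) * t - 2 * eps * eps <= q * U - 2 * eps * eps by apply: lerD h2 (lexx _).
  move=> k1; apply: le_trans k1 _.
  have : q * U - 2 * eps * eps <= q * U * (1 + p j - q) - 2 * eps * eps by apply: lerD h5 (lexx _).
  move=> k2; apply: le_trans k2 _.
  by apply: lerD (lexx _) _; rewrite lerN2.
rewrite -e1 in g2.
exact: le_trans g2 g1.
Qed.
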